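(* Let $y(t)=e^{i\theta(t)}\in C$ be a solution of the spherical mean curvature flow $y'(t)=H^S(y(t))$ with $\theta(0)=\theta_0\neq\theta_{\min}$. Then for every $t$ in its interval of existence, $$\|A^S(y(t))\|^2<\frac{g(1+\delta)}{n(\cos g\theta_0+\delta)^2}\,e^{-2gnt}\,\|H^S(y(t))\|^2.$$
   Context: Let $M^n$ be a compact isoparametric hypersurface in the unit sphere $S^{n+1}\subset\mathbb{R}^{n+2}$ (constant principal curvatures) with $g$ distinct principal curvatures; then $g\in\{1,2,3,4,6\}$. Fix $x_0\in M$ and identify the 2-dimensional normal space $\nu_{x_0}M$ of $M$ in $\mathbb{R}^{n+2}$ with $\mathbb{C}$ so that the two focal submanifolds $M_+$, $M_-$ ($\dim M_+\le\dim M_-$) meet the normal circle at $1$ and $e^{i\pi/g}$ (the intersection points closest to $x_0$). The Weyl chamber is $C=\{re^{i\theta}:r>0,\ 0<\theta<\pi/g\}$. For $k=1,\dots,g$ let $\theta_k=k\pi/g-\pi/2$, $\alpha_k=e^{i\theta_k}$, and $m_k=m_1$ for $k$ odd, $m_k=m_2$ for $k$ even, where $(m_1,m_2)$, $m_1\le m_2$, is the multiplicity data of the principal curvatures; $m_1=m_2$ if $g$ is odd, and $(m_1+m_2)g=2n$. For $x\in C$, $M_x=\{p+\tilde\xi(p):p\in M\}$ where $\tilde\xi$ is the parallel normal field on $M$ with $\tilde\xi(x_0)=x-x_0$; it is an $n$-dimensional isoparametric submanifold of $\mathbb{R}^{n+2}$ lying in $S^{n+1}(|x|)$, with normal space $\nu_{x_0}M$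 at $x$, and $T_xM_x=\oplus_kE_k$, $\dim E_k=m_k$, with Euclidean shape operator $A_\xi|_{E_k}=\langle\xi,-\alpha_k/\langle x,\alpha_k\rangle\rangle\mathrm{Id}$ ($\langle\cdot,\cdot\rangle$ the real inner product on $\mathbb{C}=\mathbb{R}^2$). $H^E(x),A^E(x)$ denote mean curvature vector and shape operator of $M_x$ at $x$ in $\mathbb{R}^{n+2}$; $H^S(x),A^S(x)$ those of $M_x$ as a hypersurface of $S^{n+1}(|x|)$; $\|A\|^2$ is the sum of squared Hilbert–Schmidt norms over an orthonormal normal basis. Set $\delta=(m_2-m_1)/(m_2+m_1)$ if $g\ge2$ and $\delta=0$ if $g=1$, and let $\theta_{\min}\in(0,\pi/g)$ be defined by $\cos g\theta_{\min}=-\delta$. The spherical MCF of $M_{y(0)}$ is the family $M_{y(t)}$. *)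

(* Defs.v *)
From Stdlib Require Import Reals.
Open Scope R_scope.

(* Vectors of the normal plane nu_{x0}M, identified with C = R^2. *)
Definition vec := (R * R)%type.
Definition inner (u v : vec) : R := fst u * fst v + snd u * snd v.
Definition normsq (v : vec) : R := inner v v.
Definition vscale (c : R) (v : vec) : vec := (c * fst v, c * snd v).
(* multiplication by i *)
Definition rot (v : vec) : vec := (- snd v, fst v).
Definition expi (t : R) : vec := (cos t, sin t).

Definition mult (m1 m2 k : nat) : nat := if Nat.odd k then m1 else m2.
Definition theta_k (g k : nat) : R := INR k * PI / INR g - PI / 2.
Definition alpha (g k : nat) : vec := expi (theta_k g k).

(* unit normal of M_x inside the sphere S^{n+1}(|x|): i x / |x| *)
Definition nuS (x : vec) : vec := vscale (/ sqrt (normsq x)) (rot x).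

(* eigenvalue of A^S(x) = A_{nuS x} on E_k:  < nuS x , - alpha_k / <x, alpha_k> > *)
Definition lamS (g : nat) (x : vec) (k : nat) : R :=
  inner (nuS x) (vscale (- / inner x (alpha g k)) (alpha g k)).

(* sum over k = 1 .. g *)
Definition sumk (g : nat) (f : nat -> R) : R := sum_f_R0 (fun j => f (S j)) (g - 1).

(* ||A^S(x)||^2 : Hilbert-Schmidt norm, dim E_k = m_k *)
Definition normA2S (g m1 m2 : nat) (x : vec) : R :=
  sumk g (fun k => INR (mult m1 m2 k) * (lamS g x k) ^ 2).

Definition HS (g m1 m2 : nat) (x : vec) : vec :=
  vscale (sumk g (fun k => INR (mult m1 m2 k) * lamS g x k)) (nuS x).

Definition delta (g m1 m2 : nat) : R :=
  if (2 <=? g)%nat then (INR m2 - INR m1) / (INR m2 + INR m1) else 0.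

Definition iso_data (g m1 m2 n : nat) : Prop :=
  (g = 1 \/ g = 2 \/ g = 3 \/ g = 4 \/ g = 6)%nat /\
  (1 <= m1)%nat /\ (m1 <= m2)%nat /\
  (Nat.odd g = true -> m1 = m2) /\ ((m1 + m2) * g = 2 * n)%nat.

(* Main.v *)
Require Import Defs.
From Stdlib Require Import Reals Lra Nsatz.
Open Scope R_scope.

Ltac nsz := cbn [pow] in *; nsatz.

Lemma cos3 x : cos (3*x) = 4*cos x^3 - 3*cos x.
Proof. replace (3*x) with (2*x + x) by ring. rewrite cos_plus, cos_2a_cos, sin_2a.
  pose proof (sin2_cos2 x). unfold Rsqr in *. nsz. Qed.
Lemma sin3 x : sin (3*x) = 3*sin x - 4*sin x^3.
Proof. replace (3*x) with (2*x + x) by ring. rewrite sin_plus, cos_2a_cos, sin_2a.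
  pose proof (sin2_cos2 x). unfold Rsqr in *. nsz. Qed.

Lemma cancel_nz (A B D : R) : D <> 0 -> (A - B) * D = 0 -> A = B.
Proof. intros HD H. apply Rmult_integral in H. destruct H; [lra|contradiction]. Qed.

Lemma c23 : cos (2*PI/3) = -1/2.
Proof. replace (2*PI/3) with (PI - PI/3) by field. rewrite cos_minus, cos_PI, sin_PI, cos_PI3. field. Qed.
Lemma s23 : sin (2*PI/3) = sqrt 3/2.
Proof. replace (2*PI/3) with (PI - PI/3) by field. rewrite sin_minus, cos_PI, sin_PI, sin_PI3. field. Qed.

Lemma P3 x : 0 < x < PI/3 ->
  cos(x-PI/3)/sin(x-PI/3) + cos(x-2*PI/3)/sin(x-2*PI/3) + cos(x-PI)/sin(x-PI)
   = 3*cos(3*x)/sin(3*x) /\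
  (cos(x-PI/3)/sin(x-PI/3))^2 + (cos(x-2*PI/3)/sin(x-2*PI/3))^2 + (cos(x-PI)/sin(x-PI))^2
   = 9/sin(3*x)^2 - 3.
Proof.
  intros Hx. pose proof PI_RGT_0.
  assert (h1: sin(x-PI/3) < 0) by (apply sin_lt_0_var; lra).
  assert (h2: sin(x-2*PI/3) < 0) by (apply sin_lt_0_var; lra).
  assert (h3: sin(x-PI) < 0) by (apply sin_lt_0_var; lra).
  assert (h4: sin(3*x) > 0) by (apply sin_gt_0; lra).
  set (k1 := cos(x-PI/3)/sin(x-PI/3)).
  set (k2 := cos(x-2*PI/3)/sin(x-2*PI/3)).
  set (k3 := cos(x-PI)/sin(x-PI)).
  set (T := 3*cos(3*x)/sin(3*x)). set (U := 9/sin(3*x)^2 - 3).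
  assert (e1: k1 * sin(x-PI/3) = cos(x-PI/3)) by (unfold k1; field; lra).
  assert (e2: k2 * sin(x-2*PI/3) = cos(x-2*PI/3)) by (unfold k2; field; lra).
  assert (e3: k3 * sin(x-PI) = cos(x-PI)) by (unfold k3; field; lra).
  assert (eT: T * sin(3*x) = 3*cos(3*x)) by (unfold T; field; lra).
  assert (eU: (U+3) * sin(3*x)^2 = 9) by (unfold U; field; lra).
  assert (nz: sin(x-PI/3)*sin(x-2*PI/3)*sin(x-PI)*sin(3*x) <> 0).
  { repeat apply Rmult_integral_contrapositive_currified; lra. }
  assert (nz1: sin(x-PI/3)*sin(x-2*PI/3)*sin(x-PI) <> 0).
  { repeat apply Rmult_integral_contrapositive_currified; lra. }
  assert (nz2: sin(3*x)^2 <> 0) by (apply pow_nonzero; lra).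
  pose proof (sin2_cos2 (3*x)) as E3. unfold Rsqr in E3.
  clearbody k1 k2 k3 T U.
  assert (K1: cos(x-PI/3)*sin(x-2*PI/3)*sin(x-PI)*sin(3*x) + sin(x-PI/3)*cos(x-2*PI/3)*sin(x-PI)*sin(3*x)
     + sin(x-PI/3)*sin(x-2*PI/3)*cos(x-PI)*sin(3*x) - 3*cos(3*x)*(sin(x-PI/3)*sin(x-2*PI/3)*sin(x-PI)) = 0 /\
     cos(x-PI/3)*cos(x-2*PI/3)*sin(x-PI) + sin(x-PI/3)*cos(x-2*PI/3)*cos(x-PI)
     + cos(x-PI/3)*sin(x-2*PI/3)*cos(x-PI) + 3*(sin(x-PI/3)*sin(x-2*PI/3)*sin(x-PI)) = 0).
  { clear - H.
  rewrite ?cos_minus, ?sin_minus.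
  rewrite cos3, sin3, c23, s23, cos_PI, sin_PI, cos_PI3, sin_PI3.
  pose proof (sin2_cos2 x) as E. unfold Rsqr in E.
  assert (R3: sqrt 3 * sqrt 3 = 3) by (apply sqrt_sqrt; lra).
  set (r := sqrt 3) in *. set (C := cos x) in *. set (S := sin x) in *.
  clearbody r C S. assert (Hh: 2 * /2 = 1) by field. unfold Rdiv in *. generalize dependent (/2). intros h Hh. split; nsz. }
  destruct K1 as [K1 K2].
  revert e1 e2 e3 eT eU nz nz1 nz2 E3 K1 K2.
  generalize (sin(x-PI/3)) (sin(x-2*PI/3)) (sin(x-PI)) (sin(3*x)) (cos(x-PI/3)) (cos(x-2*PI/3)) (cos(x-PI)) (cos(3*x)).
  intros s1 s2 s3 s c1 c2 c3 c e1 e2 e3 eT eU nz nz1 nz2 E3 K1 K2.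
  assert (HS1: k1+k2+k3 = T).
  { eapply cancel_nz; [exact nz|]. rewrite <- K1, <- e1, <- e2, <- e3, <- eT. ring. }
  assert (HS2: k1*k2+k2*k3+k3*k1 = -3).
  { eapply cancel_nz; [exact nz1|]. rewrite <- K2, <- e1, <- e2, <- e3. ring. }
  split; [exact HS1|].
  eapply cancel_nz; [exact nz2|].
  nsz.
Qed.

Ltac fz := field_simplify; [ try (unfold Rdiv; apply Rmult_eq_0_compat_r); nsz | auto..].

Lemma P2 x : 0 < x < PI/2 ->
  cos(x-PI/2)/sin(x-PI/2) + cos(x-PI)/sin(x-PI) = 2*cos(2*x)/sin(2*x) /\
  (cos(x-PI/2)/sin(x-PI/2))^2 + (cos(x-PI)/sin(x-PI))^2 = 4/sin(2*x)^2 - 2.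
Proof.
  intros Hx. pose proof PI_RGT_0.
  assert (h1: sin(x-PI/2) < 0) by (apply sin_lt_0_var; lra).
  assert (h3: sin(x-PI) < 0) by (apply sin_lt_0_var; lra).
  assert (h4: sin(2*x) > 0) by (apply sin_gt_0; lra).
  rewrite !sin_minus, !cos_minus, sin_2a, cos_2a_cos, cos_PI, sin_PI, cos_PI2, sin_PI2 in *.
  pose proof (sin2_cos2 x) as E. unfold Rsqr in E.
  set (C := cos x) in *. set (S := sin x) in *. clearbody C S.
  assert (hc: C <> 0) by lra. assert (hs: S <> 0) by lra.
  split.
  - apply cancel_nz with (D := S*C); [nra|]. fz.
  - apply cancel_nz with (D := (S*C)^2); [apply pow_nonzero; nra|]. fz.
Qed.

Lemma P1 x : 0 < x < PI ->
  cos(x-PI)/sin(x-PI) = cos x/sin x /\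
  (cos(x-PI)/sin(x-PI))^2 = 1/sin x^2 - 1.
Proof.
  intros Hx. assert (h: sin x > 0) by (apply sin_gt_0; lra).
  rewrite sin_minus, cos_minus, cos_PI, sin_PI.
  pose proof (sin2_cos2 x) as E. unfold Rsqr in E.
  set (C := cos x) in *. set (S := sin x) in *. clearbody C S.
  assert (hs: S <> 0) by lra.
  split.
  - field; auto.
  - apply cancel_nz with (D := S^2); [apply pow_nonzero; nra|]. fz.
Qed.

Lemma cos_pPI2 u : cos (u + PI/2) = - sin u.
Proof. rewrite cos_plus, cos_PI2, sin_PI2. ring. Qed.
Lemma sin_pPI2 u : sin (u + PI/2) = cos u.
Proof. rewrite sin_plus, cos_PI2, sin_PI2. ring. Qed.

Lemma even_fin p u M1 M2 lo le qo qe :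
  sin u <> 0 -> cos u <> 0 ->
  lo = p*cos(u+PI/2)/sin(u+PI/2) -> le = p*cos u/sin u ->
  qo = p^2/sin(u+PI/2)^2 - p -> qe = p^2/sin u^2 - p ->
  (-(M1*lo+M2*le)) * sin(2*u) = -p*((M1+M2)*cos(2*u) + M2 - M1) /\
  (M1*qo+M2*qe)*sin(2*u)^2 = (2*p)^2/2*(M1*(1-cos(2*u)) + M2*(1+cos(2*u)))
       - p*(M1+M2)*sin(2*u)^2.
Proof.
  intros hs hc -> -> -> ->. rewrite cos_pPI2, sin_pPI2, sin_2a, cos_2a_cos.
  pose proof (sin2_cos2 u) as E. unfold Rsqr in E.
  set (C := cos u) in *. set (S := sin u) in *. clearbody C S.
  split; apply Rminus_diag_uniq; fz.
Qed.

Lemma lam_eq g k th a : a = th - INR k * PI / INR g -> -PI < a < 0 ->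
  lamS g (expi th) k = - (cos a / sin a).
Proof.
  intros Ha Hr. assert (hs: sin a < 0) by (apply sin_lt_0_var; lra).
  unfold lamS, nuS, vscale, rot, alpha, expi, theta_k, normsq, inner; cbn [fst snd].
  replace (cos th * cos th + sin th * sin th) with 1 by (pose proof (sin2_cos2 th); unfold Rsqr in *; lra).
  rewrite sqrt_1.
  set (b := INR k * PI / INR g) in *.
  replace (b - PI/2) with (-(PI/2 - b)) by ring.
  rewrite cos_neg, sin_neg, cos_shift, sin_shift.
  assert (e1: cos th * sin b + sin th * - cos b = - sin a) by (subst a; rewrite sin_minus; ring).
  assert (e2: cos a = cos th * cos b + sin th * sin b) by (subst a; rewrite cos_minus; ring).
  rewrite e1, e2. field. lra.
Qed.

Definition GF g m1 m2 th : Prop :=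
 sumk g (fun k => INR (mult m1 m2 k) * lamS g (expi th) k) * sin(INR g*th)
   = -(INR g/2)*((INR m1+INR m2)*cos(INR g*th) + INR m2 - INR m1) /\
 normA2S g m1 m2 (expi th) * sin(INR g*th)^2
   = (INR g^2/2)*(INR m1*(1-cos(INR g*th)) + INR m2*(1+cos(INR g*th)))
     - (INR g/2)*(INR m1+INR m2)*sin(INR g*th)^2.

Ltac inrs := rewrite ?(INR_IZR_INZ 1), ?(INR_IZR_INZ 2), ?(INR_IZR_INZ 3), ?(INR_IZR_INZ 4), ?(INR_IZR_INZ 5), ?(INR_IZR_INZ 6) in *; simpl Z.of_nat in *.

Lemma case6 m1 m2 th : 0 < th < PI / INR 6 -> GF 6 m1 m2 th.
Proof.
  intros Hth. pose proof PI_RGT_0. inrs. unfold GF, normA2S, sumk.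
  cbn [sum_f_R0 mult Nat.odd Nat.even negb Nat.sub].
  rewrite (lam_eq 6 1 th (th+PI/6-PI/3)), (lam_eq 6 2 th (th-PI/3)),
          (lam_eq 6 3 th (th+PI/6-2*PI/3)), (lam_eq 6 4 th (th-2*PI/3)),
          (lam_eq 6 5 th (th+PI/6-PI)), (lam_eq 6 6 th (th-PI));
   try (inrs; field); try lra.
  inrs.
  destruct (P3 (th+PI/6)) as [Ao Bo]; [lra|].
  destruct (P3 th) as [Ae Be]; [lra|].
  replace (3*(th+PI/6)) with (3*th+PI/2) in Ao, Bo by field.
  assert (hs: sin (3*th) > 0) by (apply sin_gt_0; lra).
  assert (hc: cos (3*th) > 0) by (apply cos_gt_0; lra).
  match type of Bo with ?L = _ => set (qo := L) in Bo end.
  match type of Be with ?L = _ => set (qe := L) in Be end.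
  destruct (even_fin 3 (3*th) (INR m1) (INR m2) _ _ qo qe ltac:(lra) ltac:(lra) Ao Ae) as [F1 F2].
  { rewrite Bo. field. rewrite sin_pPI2. lra. } { rewrite Be. field. lra. }
  unfold qo, qe in F2.
  replace (6*th) with (2*(3*th)) by ring.
  split; lra.
Qed.

Lemma case4 m1 m2 th : 0 < th < PI / INR 4 -> GF 4 m1 m2 th.
Proof.
  intros Hth. pose proof PI_RGT_0. inrs. unfold GF, normA2S, sumk.
  cbn [sum_f_R0 mult Nat.odd Nat.even negb Nat.sub].
  rewrite (lam_eq 4 1 th (th+PI/4-PI/2)), (lam_eq 4 2 th (th-PI/2)),
          (lam_eq 4 3 th (th+PI/4-PI)), (lam_eq 4 4 th (th-PI));
   try (inrs; field); try lra.
  inrs.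
  destruct (P2 (th+PI/4)) as [Ao Bo]; [lra|].
  destruct (P2 th) as [Ae Be]; [lra|].
  replace (2*(th+PI/4)) with (2*th+PI/2) in Ao, Bo by field.
  assert (hs: sin (2*th) > 0) by (apply sin_gt_0; lra).
  assert (hc: cos (2*th) > 0) by (apply cos_gt_0; lra).
  match type of Bo with ?L = _ => set (qo := L) in Bo end.
  match type of Be with ?L = _ => set (qe := L) in Be end.
  destruct (even_fin 2 (2*th) (INR m1) (INR m2) _ _ qo qe ltac:(lra) ltac:(lra) Ao Ae) as [F1 F2].
  { rewrite Bo. field. rewrite sin_pPI2. lra. } { rewrite Be. field. lra. }
  unfold qo, qe in F2.
  replace (4*th) with (2*(2*th)) by ring.
  split; lra.
Qed.

Lemma case2 m1 m2 th : 0 < th < PI / INR 2 -> GF 2 m1 m2 th.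
Proof.
  intros Hth. pose proof PI_RGT_0. inrs. unfold GF, normA2S, sumk.
  cbn [sum_f_R0 mult Nat.odd Nat.even negb Nat.sub].
  rewrite (lam_eq 2 1 th (th+PI/2-PI)), (lam_eq 2 2 th (th-PI));
   try (inrs; field); try lra.
  inrs.
  destruct (P1 (th+PI/2)) as [Ao Bo]; [lra|].
  destruct (P1 th) as [Ae Be]; [lra|].
  assert (hs: sin th > 0) by (apply sin_gt_0; lra).
  assert (hc: cos th > 0) by (apply cos_gt_0; lra).
  match type of Bo with ?L = _ => set (qo := L) in Bo end.
  match type of Be with ?L = _ => set (qe := L) in Be end.
  match type of Ao with ?L = _ => set (lo := L) in Ao end.
  match type of Ae with ?L = _ => set (le := L) in Ae end.
  destruct (even_fin 1 th (INR m1) (INR m2) lo le qo qe ltac:(lra) ltac:(lra)) as [F1 F2].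
  { rewrite Ao. field. rewrite sin_pPI2. lra. } { rewrite Ae. field. lra. }
  { rewrite Bo. field. rewrite sin_pPI2. lra. } { rewrite Be. field. lra. }
  unfold lo, le, qo, qe in F1, F2.
  replace (2*th) with (2*(1*th)) by ring. replace (1*th) with th by ring.
  split; lra.
Qed.

Lemma case3 m1 m2 th : m1 = m2 -> 0 < th < PI / INR 3 -> GF 3 m1 m2 th.
Proof.
  intros <- Hth. pose proof PI_RGT_0. inrs. unfold GF, normA2S, sumk.
  cbn [sum_f_R0 mult Nat.odd Nat.even negb Nat.sub].
  rewrite (lam_eq 3 1 th (th-PI/3)), (lam_eq 3 2 th (th-2*PI/3)),
          (lam_eq 3 3 th (th-PI));
   try (inrs; field); try lra.
  inrs.
  destruct (P3 th) as [Ae Be]; [lra|].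
  assert (hs: sin (3*th) > 0) by (apply sin_gt_0; lra).
  match type of Be with ?L = _ => set (qe := L) in Be end.
  match type of Ae with ?L = _ => set (le := L) in Ae end.
  assert (F1: INR m1 * le * sin(3*th) = INR m1 * (3 * cos (3*th))) by (rewrite Ae; field; lra).
  assert (F2: INR m1 * qe * sin(3*th)^2 = INR m1 * (9 - 3 * sin(3*th)^2)) by (rewrite Be; field; lra).
  unfold le, qe in F1, F2.
  split; lra.
Qed.

Lemma case1 m1 m2 th : m1 = m2 -> 0 < th < PI / INR 1 -> GF 1 m1 m2 th.
Proof.
  intros <- Hth. pose proof PI_RGT_0. inrs. unfold GF, normA2S, sumk.
  cbn [sum_f_R0 mult Nat.odd Nat.even negb Nat.sub].
  rewrite (lam_eq 1 1 th (th-PI));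
   try (inrs; field); try lra.
  inrs.
  destruct (P1 th) as [Ae Be]; [lra|].
  assert (hs: sin th > 0) by (apply sin_gt_0; lra).
  match type of Be with ?L = _ => set (qe := L) in Be end.
  match type of Ae with ?L = _ => set (le := L) in Ae end.
  assert (F1: INR m1 * le * sin(1*th) = INR m1 * (cos (1*th))) by (rewrite Ae; replace (1*th) with th by ring; field; lra).
  assert (F2: INR m1 * qe * sin(1*th)^2 = INR m1 * (1 - sin(1*th)^2)) by (rewrite Be; replace (1*th) with th by ring; field; lra).
  unfold le, qe in F1, F2.
  split; lra.
Qed.

Lemma deriv_F (G dl k : R) (th h : R -> R) t :
  0 < th t < PI ->
  derivable_pt_lim (fun s => cos (th s)) t (- h t * sin (th t)) ->
  derivable_pt_lim (fun s => (cos (G * acos (cos (th s))) + dl) * exp (- k * s)) t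
    ((- sin (G * th t) * (G * h t)) * exp (-k * t) + (cos (G * th t) + dl) * (exp (-k * t) * - k)).
Proof.
  intros Ht HC.
  assert (hs: sin (th t) > 0) by (apply sin_gt_0; lra).
  pose proof (sin2_cos2 (th t)) as E. unfold Rsqr in E.
  set (y := cos (th t)) in *.
  assert (Hy: -1 < y < 1) by nra.
  assert (D1: derivable_pt_lim acos y (-1/sqrt(1-y²))).
  { apply (derive_pt_eq_1 _ _ _ (derivable_pt_acos y Hy)). apply derive_pt_acos. }
  assert (Esq: sqrt (1 - y²) = sin (th t)).
  { replace (1 - y²) with (sin (th t))² by (unfold Rsqr; lra). apply sqrt_Rsqr; lra. }
  rewrite Esq in D1.
  assert (Eac: acos y = th t) by (apply acos_cos; lra).
  pose proof (derivable_pt_lim_comp _ _ t _ _ HC D1) as D2.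
  pose proof (derivable_pt_lim_scal _ G t _ D2) as D3.
  pose proof (derivable_pt_lim_comp _ cos t _ _ D3 (derivable_pt_lim_cos _)) as D4.
  pose proof (derivable_pt_lim_plus _ _ t _ _ D4 (derivable_pt_lim_const dl t)) as D5.
  pose proof (derivable_pt_lim_scal _ (-k) t _ (derivable_pt_lim_id t)) as D6.
  pose proof (derivable_pt_lim_comp _ exp t _ _ D6 (derivable_pt_lim_exp _)) as D6'.
  pose proof (derivable_pt_lim_mult _ _ t _ _ D5 D6') as D7.
  unfold mult_fct, plus_fct, comp, mult_real_fct, fct_cte, id in D7. cbv beta in D7.
  fold y in D7. rewrite Eac in D7.
  match type of D7 with derivable_pt_lim _ _ ?v => replace (_ + _) with v end.
  - exact D7.
  - field. lra.
Qed.

Lemma const_on (F : R -> R) a b : (forall x, a < x < b -> derivable_pt_lim F x 0) ->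
  a < 0 < b -> forall t, a < t < b -> F t = F 0.
Proof.
  intros HD Hab t Ht.
  destruct (Rtotal_order t 0) as [Hlt|[Heq|Hgt]].
  - destruct (MVT_cor2 F (fun _ => 0) t 0 Hlt) as [c [Hc _]].
    { intros c Hc. apply HD. lra. }
    lra.
  - subst. reflexivity.
  - destruct (MVT_cor2 F (fun _ => 0) 0 t Hgt) as [c [Hc _]].
    { intros c Hc. apply HD. lra. }
    lra.
Qed.

Lemma GF_all g m1 m2 n th : iso_data g m1 m2 n -> 0 < th < PI / INR g -> GF g m1 m2 th.
Proof.
  intros [Hg [_ [_ [Hodd _]]]] Hth.
  destruct Hg as [->|[->|[->|[->| ->]]]].
  - apply case1; auto.
  - apply case2; auto.
  - apply case3; auto.
  - apply case4; auto.
  - apply case6; auto.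
Qed.

Lemma nrel g m1 m2 n : iso_data g m1 m2 n -> INR n = INR g * (INR m1 + INR m2) / 2.
Proof.
  intros [_ [_ [_ [_ He]]]]. apply (f_equal INR) in He.
  rewrite !mult_INR, plus_INR in He. simpl (INR 2) in He. lra.
Qed.

Lemma drel g m1 m2 n : iso_data g m1 m2 n -> delta g m1 m2 = (INR m2 - INR m1)/(INR m2 + INR m1).
Proof.
  intros [Hg [_ [_ [Hodd _]]]]. unfold delta.
  destruct Hg as [->|[->|[->|[->| ->]]]]; simpl; auto.
  rewrite (Hodd eq_refl). unfold Rdiv. rewrite Rminus_diag, Rmult_0_l. reflexivity.
Qed.

Definition hf g m1 m2 x := sumk g (fun k => INR (mult m1 m2 k) * lamS g (expi x) k).

Lemma nuS_expi x : nuS (expi x) = (- sin x, cos x).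
Proof.
  unfold nuS, expi, normsq, inner, vscale, rot; cbn [fst snd].
  replace (cos x * cos x + sin x * sin x) with 1 by (pose proof (sin2_cos2 x); unfold Rsqr in *; lra).
  rewrite sqrt_1, Rinv_1, !Rmult_1_l. reflexivity.
Qed.

Lemma fst_HS g m1 m2 x : fst (HS g m1 m2 (expi x)) = - hf g m1 m2 x * sin x.
Proof. unfold HS. rewrite nuS_expi. unfold vscale, hf; cbn [fst snd]. lra. Qed.

Lemma normsq_HS g m1 m2 x : normsq (HS g m1 m2 (expi x)) = (hf g m1 m2 x)^2.
Proof. unfold HS. rewrite nuS_expi. unfold normsq, inner, vscale, hf; cbn [fst snd].
  pose proof (sin2_cos2 x). unfold Rsqr in *. 
  set (u := sumk _ _). simpl. nra. Qed.


Theorem corollary4p12 (g m1 m2 n : nat) (thmin th0 a b : R) (theta : R -> R) :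
  iso_data g m1 m2 n ->
  0 < thmin < PI / INR g ->
  cos (INR g * thmin) = - delta g m1 m2 ->
  a < 0 < b ->
  (forall t, a < t < b ->
     0 < theta t < PI / INR g /\
     derivable_pt_lim (fun s => fst (expi (theta s))) t
       (fst (HS g m1 m2 (expi (theta t)))) /\
     derivable_pt_lim (fun s => snd (expi (theta s))) t
       (snd (HS g m1 m2 (expi (theta t))))) ->
  theta 0 = th0 ->
  th0 <> thmin ->
  forall t, a < t < b ->
    normA2S g m1 m2 (expi (theta t)) <
      INR g * (1 + delta g m1 m2) /
        (INR n * (cos (INR g * th0) + delta g m1 m2) ^ 2)
      * exp (- 2 * INR g * INR n * t)
      * normsq (HS g m1 m2 (expi (theta t))).
Proof.
  intros Hiso Hmin Hcmin Hab Hflow H0 Hne t Ht.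
  pose proof (nrel _ _ _ _ Hiso) as Hn. pose proof (drel _ _ _ _ Hiso) as Hd.
  pose proof PI_RGT_0 as HPI.
  assert (Hg1: 1 <= INR g).
  { destruct Hiso as [Hg _]. destruct Hg as [->|[->|[->|[->| ->]]]]; simpl; lra. }
  assert (Hm: 1 <= INR m1 <= INR m2).
  { destruct Hiso as [_ [H1 [H2 _]]]. split; [apply (le_INR 1); auto| apply le_INR; auto]. }
  assert (HgPI: PI / INR g <= PI).
  { apply Rmult_le_reg_r with (INR g); [lra|]. unfold Rdiv. rewrite Rmult_assoc, Rinv_l by lra. nra. }
  assert (Hrng: forall s, a < s < b -> 0 < INR g * theta s < PI).
  { intros s Hs. destruct (Hflow s Hs) as [[H1 H2] _]. split; [nra|].
    apply Rmult_lt_compat_l with (r := INR g) in H2; [|lra].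
    unfold Rdiv in H2. rewrite <- Rmult_assoc, (Rmult_comm (INR g) PI), Rmult_assoc, Rinv_r in H2 by lra. lra. }
  set (G := INR g) in *. set (N := INR n) in *. set (M1 := INR m1) in *. set (M2 := INR m2) in *.
  set (dl := delta g m1 m2) in *.
  set (F := fun s => (cos (G * acos (cos (theta s))) + dl) * exp (- (G*N) * s)).
  assert (HD: forall x, a < x < b -> derivable_pt_lim F x 0).
  { intros x Hx. destruct (Hflow x Hx) as [Hth [HC _]].
    assert (Hth': 0 < theta x < PI) by lra.
    rewrite fst_HS in HC.
    pose proof (deriv_F G dl (G*N) theta (fun s => hf g m1 m2 (theta s)) x Hth' HC) as D.
    destruct (GF_all _ _ _ _ _ Hiso Hth) as [E1 _].
    fold (hf g m1 m2 (theta x)) in E1. fold G M1 M2 in E1.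
    unfold F. match type of D with derivable_pt_lim _ _ ?v => replace 0 with v end; [exact D|].
    cbv beta.
    set (h := hf g m1 m2 (theta x)) in *. set (s := sin (G * theta x)) in *. set (c := cos (G * theta x)) in *.
    set (e := exp (- (G * N) * x)).
    assert (Hhs: h * s = - N * (c + dl)).
    { rewrite E1, Hn, Hd. field. lra. }
    replace (- s * (G * h) * e + (c + dl) * (e * - (G * N))) with (- G * e * (h * s + N * (c + dl))) by ring.
    rewrite Hhs. ring. }
  pose proof (const_on F a b HD Hab t Ht) as HF.
  unfold F in HF.
  assert (Ht0: 0 < theta 0 < PI / G) by (apply Hflow; lra).
  rewrite !acos_cos in HF.
  2: { pose proof (Hflow 0 ltac:(lra)) as [[? ?] _]. split; lra. }
  2: { pose proof (Hflow t Ht) as [[? ?] _]. split; lra. }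
  rewrite Rmult_0_r, exp_0, Rmult_1_r, H0 in HF.
  rewrite H0 in Ht0.
  assert (Hw0: cos (G * th0) + dl <> 0).
  { intro Hz. apply Hne.
    assert (cos (G*th0) = cos (G*thmin)) by lra.
    apply cos_inj in H.
    - apply Rmult_eq_reg_l with G; [exact H | lra].
    - assert (0 < G * th0 < PI) by (rewrite <- H0; apply Hrng; lra). lra.
    - assert (G * thmin < PI).
      { destruct Hmin as [_ H2]. apply Rmult_lt_compat_l with (r := G) in H2; [|lra].
        unfold Rdiv in H2. rewrite <- Rmult_assoc, (Rmult_comm G PI), Rmult_assoc, Rinv_r in H2 by lra. lra. }
      split; nra. }
  destruct (GF_all _ _ _ _ _ Hiso (proj1 (Hflow t Ht))) as [E1 E2].
  fold (hf g m1 m2 (theta t)) in E1. fold G M1 M2 in E1, E2.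
  rewrite normsq_HS.
  set (h := hf g m1 m2 (theta t)) in *. set (s := sin (G * theta t)) in *. set (c := cos (G * theta t)) in *.
  set (A := normA2S g m1 m2 (expi (theta t))) in *.
  set (e := exp (- (G * N) * t)) in *.
  assert (He: 0 < e) by apply exp_pos.
  assert (Hs: 0 < s) by (apply sin_gt_0; apply Hrng; auto).
  assert (Hc: c <= 1) by apply COS_bound.
  replace (exp (-2 * G * N * t)) with (e * e) by (unfold e; rewrite <- exp_plus; f_equal; ring).
  rewrite <- HF.
  assert (Hw: c + dl <> 0).
  { intro Hz. apply Hw0. rewrite <- HF, Hz. ring. }
  assert (HN: 0 < N) by (rewrite Hn; nra).
  assert (Hhs: h = - N * (c + dl) / s).
  { apply (Rmult_eq_reg_r s); [|lra]. unfold Rdiv. rewrite Rmult_assoc, Rinv_l by lra.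
    rewrite Rmult_1_r, E1, Hn, Hd. field. lra. }
  assert (HA: A = (G * N * (1 + dl * c) - N * s^2) / s^2).
  { apply (Rmult_eq_reg_r (s^2)); [|apply pow_nonzero; lra]. unfold Rdiv.
    rewrite Rmult_assoc, Rinv_l by (apply pow_nonzero; lra). rewrite Rmult_1_r, E2, Hn, Hd. field. lra. }
  assert (HR: G * (1 + dl) / (N * ((c + dl) * e) ^ 2) * (e * e) * h ^ 2 = G * N * (1 + dl) / s^2).
  { rewrite Hhs. field. repeat split; lra. }
  rewrite HR, HA.
  assert (Hdl: 0 <= dl) by (rewrite Hd; unfold Rdiv; apply Rmult_le_pos; [lra | left; apply Rinv_0_lt_compat; lra]).
  unfold Rdiv. apply Rmult_lt_compat_r.
  - apply Rinv_0_lt_compat. nra.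
  - assert (P1: 0 <= (G * N * dl) * (1 - c)) by (apply Rmult_le_pos; [apply Rmult_le_pos; nra | lra]).
    assert (P2: 0 < N * s^2) by (apply Rmult_lt_0_compat; [lra | apply pow_lt; lra]).
    lra.
Qed.
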